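(* The systems ${\bf Km}$ and ${\bf Km}_\circ$ coincide: for every $\Gamma\cup\{\alpha\}\subseteq For$, $\Gamma\vdash_{\bf Km}\alpha$ iff $\Gamma\vdash_{{\bf Km}_\circ}\alpha$.
   Context: Formulas are built from a denumerable set of propositional variables by the unary connectives $\neg$, $\Box$ and the binary connective $\to$; $For$ is the set of all formulas. Abbreviations: $\Diamond\alpha:=\neg\Box\neg\alpha$, $\alpha\vee\beta:=\neg\alpha\to\beta$, $\alpha\wedge\beta:=\neg(\alpha\to\neg\beta)$, $\circ\alpha:=\Box\alpha\to\Diamond\alpha$, $\bullet\alpha:=\neg\circ\alpha$. All Hilbert calculi below have as axioms all instances (over $For$) of the axiom schemas of a standard Hilbert calculus for classical propositional logic in the signature $\{\neg,\to\}$, plus the listed modal schemas, with modus ponens as the only rule; $\Gamma\vdash_{\bf L}\alpha$ means there is a derivation of $\alpha$ from $\Gamma$ in ${\bf L}$. Common schemas: (M1) $\neg\Diamond\alpha\to\Box(\alpha\to\beta)$; (M2) $\Box\beta\to\Box(\alpha\to\beta)$; (DN1) $\Box\alpha\to\Box\neg\neg\alpha$; (DN2) $\Box\neg\neg\alpha\to\Box\alpha$. ${\bf Km}$: (M1), (M2), (DN1), (DN2) and (K') $\Diamond\alpha\to(\Box(\alpha\to\beta)\to(\Box\alpha\to\Box\beta))$; (K1') $\Diamond\neg\beta\to(\Box(\alpha\to\beta)\to(\Diamond\alpha\to\Diamond\beta))$; (K2') $\Diamond\alpha\to(\Diamond(\alpha\to\beta)\to(\Box\alpha\to\Diamond\beta))$;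 (M3') $(\Diamond\alpha\vee\Diamond\neg\alpha)\to(\Diamond\beta\to\Diamond(\alpha\to\beta))$; (M4') $\Diamond\neg\beta\to(\Diamond\neg\alpha\to\Diamond(\alpha\to\beta))$; (I1) $(\Box\alpha\wedge\Box\neg\alpha)\to(\Box(\alpha\to\beta)\wedge\Box\neg(\alpha\to\beta))$; (I2) $(\Box\beta\wedge\Box\neg\beta)\to(\Box(\alpha\to\beta)\wedge\Box\neg(\alpha\to\beta))$. ${\bf Km}_\circ$: (M1), (M2), (DN1), (DN2) and (K'') $\circ\alpha\to(\Box(\alpha\to\beta)\to(\Box\alpha\to\Box\beta))$; (K1'') $\circ\beta\to(\Box(\alpha\to\beta)\to(\Diamond\alpha\to\Diamond\beta))$; (K2'') $\circ\alpha\to(\Diamond(\alpha\to\beta)\to(\Box\alpha\to\Diamond\beta))$; (M3'') $\circ\alpha\to(\Diamond\beta\to\Diamond(\alpha\to\beta))$; (M4'') $\circ\beta\to(\Diamond\neg\alpha\to\Diamond(\alpha\to\beta))$; (I1') $\bullet\alpha\to\bullet(\alpha\to\beta)$; (I2') $\bullet\beta\to\bullet(\alpha\to\beta)$. *)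

(* Defs.v *)
Inductive For : Type :=
| Var : nat -> For
| Neg : For -> For
| Box : For -> For
| Imp : For -> For -> For.

Definition Dia (a : For) : For := Neg (Box (Neg a)).
Definition Or (a b : For) : For := Imp (Neg a) b.
Definition And (a b : For) : For := Neg (Imp a (Neg b)).
Definition Circ (a : For) : For := Imp (Box a) (Dia a).
Definition Bullet (a : For) : For := Neg (Circ a).

(* Standard Hilbert calculus for classical propositional logic in {¬,→}
   (Łukasiewicz's axioms), instantiated over all formulas. *)
Inductive CPL_ax : For -> Prop :=
| Ax1 a b : CPL_ax (Imp a (Imp b a))
| Ax2 a b c : CPL_ax (Imp (Imp a (Imp b c)) (Imp (Imp a b) (Imp a c)))
| Ax3 a b : CPL_ax (Imp (Imp (Neg a) (Neg b)) (Imp b a)).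

Inductive Common_ax : For -> Prop :=
| M1 a b : Common_ax (Imp (Neg (Dia a)) (Box (Imp a b)))
| M2 a b : Common_ax (Imp (Box b) (Box (Imp a b)))
| DN1 a : Common_ax (Imp (Box a) (Box (Neg (Neg a))))
| DN2 a : Common_ax (Imp (Box (Neg (Neg a))) (Box a)).

Inductive Km_ax : For -> Prop :=
| Km_K a b : Km_ax (Imp (Dia a) (Imp (Box (Imp a b)) (Imp (Box a) (Box b))))
| Km_K1 a b : Km_ax (Imp (Dia (Neg b)) (Imp (Box (Imp a b)) (Imp (Dia a) (Dia b))))
| Km_K2 a b : Km_ax (Imp (Dia a) (Imp (Dia (Imp a b)) (Imp (Box a) (Dia b))))
| Km_M3 a b : Km_ax (Imp (Or (Dia a) (Dia (Neg a))) (Imp (Dia b) (Dia (Imp a b))))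
| Km_M4 a b : Km_ax (Imp (Dia (Neg b)) (Imp (Dia (Neg a)) (Dia (Imp a b))))
| Km_I1 a b : Km_ax (Imp (And (Box a) (Box (Neg a)))
                          (And (Box (Imp a b)) (Box (Neg (Imp a b)))))
| Km_I2 a b : Km_ax (Imp (And (Box b) (Box (Neg b)))
                          (And (Box (Imp a b)) (Box (Neg (Imp a b))))).

Inductive Kmc_ax : For -> Prop :=
| Kmc_K a b : Kmc_ax (Imp (Circ a) (Imp (Box (Imp a b)) (Imp (Box a) (Box b))))
| Kmc_K1 a b : Kmc_ax (Imp (Circ b) (Imp (Box (Imp a b)) (Imp (Dia a) (Dia b))))
| Kmc_K2 a b : Kmc_ax (Imp (Circ a) (Imp (Dia (Imp a b)) (Imp (Box a) (Dia b))))
| Kmc_M3 a b : Kmc_ax (Imp (Circ a) (Imp (Dia b) (Dia (Imp a b))))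
| Kmc_M4 a b : Kmc_ax (Imp (Circ b) (Imp (Dia (Neg a)) (Dia (Imp a b))))
| Kmc_I1 a b : Kmc_ax (Imp (Bullet a) (Bullet (Imp a b)))
| Kmc_I2 a b : Kmc_ax (Imp (Bullet b) (Bullet (Imp a b))).

Inductive derives (Ax : For -> Prop) (Gamma : For -> Prop) : For -> Prop :=
| d_hyp a : Gamma a -> derives Ax Gamma a
| d_ax a : Ax a -> derives Ax Gamma a
| d_mp a b : derives Ax Gamma (Imp a b) -> derives Ax Gamma a -> derives Ax Gamma b.

Definition Km_axioms (a : For) : Prop := CPL_ax a \/ Common_ax a \/ Km_ax a.
Definition Kmc_axioms (a : For) : Prop := CPL_ax a \/ Common_ax a \/ Kmc_ax a.

Definition Km_derives (Gamma : For -> Prop) (a : For) : Prop := derives Km_axioms Gamma a.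
Definition Kmc_derives (Gamma : For -> Prop) (a : For) : Prop := derives Kmc_axioms Gamma a.

(* Main.v *)
Require Import Defs.

Section Gen.
Variable Ax : For -> Prop.
Hypothesis hCPL : forall a, CPL_ax a -> Ax a.
Hypothesis hCom : forall a, Common_ax a -> Ax a.

Definition ext (G : For -> Prop) (a : For) : For -> Prop := fun x => G x \/ x = a.

Local Notation D := (derives Ax).

Ltac hyp := apply d_hyp; unfold ext; auto 10.
Ltac ax1 := apply d_ax; apply hCPL; constructor.

Lemma imp_id G a : D G (Imp a a).
Proof.
  eapply d_mp. eapply d_mp. apply d_ax, hCPL, (Ax2 a (Imp a a) a).
  apply d_ax, hCPL, Ax1. apply d_ax, hCPL, (Ax1 a a).
Qed.

Lemma ded G a b : D (ext G a) b -> D G (Imp a b).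
Proof.
  induction 1.
  - destruct H as [H|H].
    + eapply d_mp. ax1. now apply d_hyp.
    + subst. apply imp_id.
  - eapply d_mp. ax1. now apply d_ax.
  - eapply d_mp. eapply d_mp. apply d_ax, hCPL, Ax2. exact IHderives1. exact IHderives2.
Qed.

Lemma weaken G G' a : D G a -> (forall x, G x -> G' x) -> D G' a.
Proof.
  induction 1; intros S.
  - apply d_hyp; auto.
  - now apply d_ax.
  - eapply d_mp; eauto.
Qed.

Lemma wk G b a : D G a -> D (ext G b) a.
Proof. intros H; eapply weaken; [exact H| unfold ext; auto]. Qed.

Lemma mp G a b : D G (Imp a b) -> D G a -> D G b.
Proof. apply d_mp. Qed.

Lemma efq G a b : D G (Neg a) -> D G a -> D G b.
Proof.
  intros H1 H2.
  assert (D G (Imp (Neg b) (Neg a))) by (eapply d_mp; [ax1|exact H1]).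
  eapply d_mp; [|exact H2]. eapply d_mp; [|exact H]. ax1.
Qed.

Lemma dne G a : D G (Neg (Neg a)) -> D G a.
Proof.
  intros H.
  eapply d_mp; [|exact H]. eapply d_mp. apply d_ax, hCPL, Ax3.
  eapply d_mp. apply d_ax, hCPL, Ax3.
  eapply d_mp. apply d_ax, hCPL, Ax1. exact H.
Qed.

Lemma raa G c x : D (ext G (Neg c)) x -> D (ext G (Neg c)) (Neg x) -> D G c.
Proof.
  intros H1 H2.
  assert (H : D G (Imp (Neg c) (Neg (Imp c c)))) by (apply ded; eapply efq; eauto).
  eapply d_mp; [|apply (imp_id G c)]. eapply d_mp; [|exact H]. ax1.
Qed.

Lemma contra G X Y : D G (Imp X Y) -> D G (Neg Y) -> D G (Neg X).
Proof.
  intros H1 H2. apply (raa _ _ Y).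
  - eapply mp. apply wk, H1. apply dne. hyp.
  - apply wk, H2.
Qed.

Lemma cases G a c : D (ext G a) c -> D (ext G (Neg a)) c -> D G c.
Proof.
  intros H1 H2. apply ded in H1. apply ded in H2.
  apply (raa _ _ c).
  - eapply mp. apply wk, H2. eapply contra. apply wk, H1. hyp.
  - hyp.
Qed.

Ltac cm := apply d_ax, hCom; constructor.

Lemma dn1 G a : D G (Box a) -> D G (Box (Neg (Neg a))).
Proof. intros H; eapply mp; [cm|exact H]. Qed.

Lemma ndn G a : D G (Neg (Box a)) -> D G (Neg (Box (Neg (Neg a)))).
Proof. intros H; eapply contra; [cm|exact H]. Qed.

Section KmToKmc.
Hypothesis hK : forall f, Kmc_ax f -> Ax f.
Ltac kx := apply d_ax, hK; constructor.

Lemma km_in G f : Km_ax f -> D G f.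
Proof.
  destruct 1; unfold Dia, Or, Circ.
  - do 3 apply ded. eapply mp. eapply mp. eapply mp. apply d_ax, hK, (Kmc_K a b).
    + apply ded. hyp.
    + hyp.
    + hyp.
  - do 3 apply ded. eapply mp. eapply mp. eapply mp. apply d_ax, hK, (Kmc_K1 a b).
    + apply ded. apply (efq _ (Box (Neg (Neg b)))). hyp. apply dn1. hyp.
    + hyp.
    + hyp.
  - do 3 apply ded. eapply mp. eapply mp. eapply mp. apply d_ax, hK, (Kmc_K2 a b).
    + apply ded. hyp.
    + hyp.
    + hyp.
  - do 2 apply ded. eapply mp. eapply mp. apply d_ax, hK, (Kmc_M3 a b).
    + apply ded. apply (cases _ (Neg (Box (Neg a)))).
      * hyp.
      * apply (efq _ (Box (Neg (Neg a)))). apply (mp _ (Neg (Neg (Box (Neg a))))). hyp. hyp. apply dn1. hyp.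
    + hyp.
  - do 2 apply ded. eapply mp. eapply mp. apply d_ax, hK, (Kmc_M4 a b).
    + apply ded. apply (efq _ (Box (Neg (Neg b)))). hyp. apply dn1. hyp.
    + hyp.
  - apply d_ax, hK. exact (Kmc_I1 a b).
  - apply d_ax, hK. exact (Kmc_I2 a b).
Qed.
End KmToKmc.

Section KmcToKm.
Hypothesis hK : forall f, Km_ax f -> Ax f.
Ltac kx := apply d_ax, hK; constructor.

Lemma kmc_in G f : Kmc_ax f -> D G f.
Proof.
  destruct 1; unfold Dia, Or, Circ.
  - do 3 apply ded. eapply mp. eapply mp. eapply mp. apply d_ax, hK, (Km_K a b).
    + apply (mp _ (Box a)). hyp. hyp.
    + hyp.
    + hyp.
  - do 3 apply ded. apply (cases _ (Box b)).
    + apply (mp _ (Box b)). hyp. hyp.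
    + eapply mp. eapply mp. eapply mp. apply d_ax, hK, (Km_K1 a b).
      * apply ndn. hyp.
      * hyp.
      * hyp.
  - do 3 apply ded. eapply mp. eapply mp. eapply mp. apply d_ax, hK, (Km_K2 a b).
    + apply (mp _ (Box a)). hyp. hyp.
    + hyp.
    + hyp.
  - do 2 apply ded. eapply mp. eapply mp. apply d_ax, hK, (Km_M3 a b).
    + apply ded. apply ndn. apply (contra _ _ (Neg (Box (Neg a)))). hyp. hyp.
    + hyp.
  - do 2 apply ded. apply (cases _ (Box b)).
    + eapply mp. eapply mp. apply d_ax, hK, (Km_M3 a b).
      * apply ded. hyp.
      * apply (mp _ (Box b)). hyp. hyp.
    + eapply mp. eapply mp. apply d_ax, hK, (Km_M4 a b).
      * apply ndn. hyp.
      * hyp.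
  - apply d_ax, hK. exact (Km_I1 a b).
  - apply d_ax, hK. exact (Km_I2 a b).
Qed.
End KmcToKm.
End Gen.

Theorem mainTheorem10 : forall (Gamma : For -> Prop) (alpha : For),
  Km_derives Gamma alpha <-> Kmc_derives Gamma alpha.
Proof.
  intros G a; split; induction 1.
  - now apply d_hyp.
  - destruct H as [H|[H|H]].
    + apply d_ax; now left.
    + apply d_ax; now right; left.
    + apply (km_in Kmc_axioms); auto; intros f Hf; unfold Kmc_axioms; tauto.
  - eapply d_mp; eauto.
  - now apply d_hyp.
  - destruct H as [H|[H|H]].
    + apply d_ax; now left.
    + apply d_ax; now right; left.
    + apply (kmc_in Km_axioms); auto; intros f Hf; unfold Km_axioms; tauto.
  - eapply d_mp; eauto.
Qed.
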